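(* Let $J\in\mathbb{R}^{n\times m}$, $h\in\mathbb{R}^n$, $g\in\mathbb{R}^m$, and $f(x)=\sum_{j=1}^m\rho(J_j\cdot x+g_j)+h^Tx$ for $x\in\{-1,1\}^n$. Let $I,S\subseteq[n]$ be disjoint, and fix $x_I\in\{-1,1\}^{|I|}$, $x_S\in\{-1,1\}^{|S|}$. Then, with $X$ uniform on $\{-1,1\}^n$, \[\mathbb{E}\big[\mathbb{1}_{X_I=x_I}e^{f(X)}\,\big|\,X_S=x_S\big]=\sum_{q\in\{-1,1\}^m}e^{g\cdot q}\prod_{i\in S}e^{x_i(J^{(i)}\cdot q+h_i)}\prod_{i\in[n]\setminus S}\cosh(J^{(i)}\cdot q+h_i)\prod_{i\in I}\sigma(2x_i(J^{(i)}\cdot q+h_i)).\]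
   Context: $J_j$ denotes the $j$-th column and $J^{(i)}$ the $i$-th row of $J$; $\rho(t)=\log(e^t+e^{-t})$; $\sigma(t)=1/(1+e^{-t})$. *)

(* Defs.v *)
From HB Require Import structures.
From mathcomp Require Import all_boot all_order all_algebra.
From mathcomp Require Import all_classical all_reals all_analysis.
Set Implicit Arguments. Unset Strict Implicit. Unset Printing Implicit Defensive.
Import Order.TTheory GRing.Theory Num.Theory.
Local Open Scope ring_scope.

(* Points of {-1,1}^n are encoded as boolean vectors; [spin b] is the sign. *)
Definition spin {R : realType} (b : bool) : R := if b then 1 else -1.

Definition rho {R : realType} (t : R) : R := ln (expR t + expR (- t)).
Definition sigma {R : realType} (t : R) : R := 1 / (1 + expR (- t)).
Definition coshR {R : realType} (t : R) : R := (expR t + expR (- t)) / 2.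

Definition fRBM {R : realType} (n m : nat) (J : 'M[R]_(n, m)) (h : 'I_n -> R)
  (g : 'I_m -> R) (x : {ffun 'I_n -> bool}) : R :=
  \sum_(j < m) rho (\sum_(i < n) J i j * spin (x i) + g j)
  + \sum_(i < n) h i * spin (x i).

Definition field_i {R : realType} (n m : nat) (J : 'M[R]_(n, m)) (h : 'I_n -> R)
  (q : {ffun 'I_m -> bool}) (i : 'I_n) : R :=
  \sum_(j < m) J i j * spin (q j) + h i.

(* Conditional expectation of Y(X), X uniform on {-1,1}^n, given the event P
   (of positive probability): the average of Y over the points satisfying P. *)
Definition cond_exp_unif {R : realType} (n : nat)
  (P : pred {ffun 'I_n -> bool}) (Y : {ffun 'I_n -> bool} -> R) : R :=
  (\sum_(x | P x) Y x) / (#|[pred x | P x]|)%:R.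

(* Main.v *)
Require Import Defs.
From HB Require Import structures.
From mathcomp Require Import all_boot all_order all_algebra.
From mathcomp Require Import all_classical all_reals all_analysis.
From mathcomp Require Import ring lra.
Import Order.TTheory GRing.Theory Num.Theory.
Local Open Scope ring_scope.

Lemma prod_ind (R : realType) (n : nat) (c : 'I_n -> bool) :
  \prod_(i < n) (if c i then 1 else 0 : R) = if [forall i, c i] then 1 else 0.
Proof.
case: (boolP [forall i, c i]) => [/forallP H|].
  by rewrite big1 // => i _; rewrite H.
rewrite negb_forall => /existsP [i Hi].
by rewrite (bigD1 i) //= (negbTE Hi) mul0r.
Qed.

Lemma expR_rho (R : realType) (t : R) : expR (rho t) = expR t + expR (- t).
Proof. by rewrite /rho lnK // posrE addr_gt0 // expR_gt0. Qed.

Lemma sum_bool_exp (R : realType) (t : R) :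
  \sum_(b : bool) expR (spin b * t) = expR t + expR (- t).
Proof. by rewrite big_bool /spin /= mul1r mulN1r. Qed.

Lemma keyA (R : realType) (n m : nat) (J : 'M[R]_(n, m)) (h : 'I_n -> R)
  (g : 'I_m -> R) (X : {ffun 'I_n -> bool}) :
  expR (fRBM J h g X) = \sum_(q : {ffun 'I_m -> bool})
     expR (\sum_(j < m) g j * spin (q j)) *
     \prod_(i < n) expR (spin (X i) * field_i J h q i).
Proof.
rewrite /fRBM expRD expR_sum.
under eq_bigr do rewrite expR_rho -sum_bool_exp.
rewrite bigA_distr_bigA /= mulr_suml; apply: eq_bigr => q _.
rewrite -!expR_sum -!expRD; congr expR.
rewrite /field_i.
have E : \sum_(j < m) spin (q j) * (\sum_(i < n) J i j * spin (X i))
   = \sum_(i < n) spin (X i) * (\sum_(j < m) J i j * spin (q j)).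
  under eq_bigr do rewrite mulr_sumr.
  rewrite exchange_big /=; apply: eq_bigr => i _; rewrite mulr_sumr.
  by apply: eq_bigr => j _; ring.
have E4 : \sum_(i < m) spin (q i) * (\sum_(i0 < n) J i0 i * spin (X i0) + g i)
   = \sum_(j < m) spin (q j) * (\sum_(i < n) J i j * spin (X i)) + \sum_(j < m) g j * spin (q j).
  by rewrite -big_split; apply: eq_bigr => j _ /=; ring.
have E5 : \sum_(i < n) spin (X i) * (\sum_(j < m) J i j * spin (q j) + h i)
   = \sum_(i < n) spin (X i) * (\sum_(j < m) J i j * spin (q j)) + \sum_(i < n) h i * spin (X i).
  by rewrite -big_split; apply: eq_bigr => j _ /=; ring.
rewrite E4 E5 E; ring.
Qed.

Lemma cosh_sigma (R : realType) (s : bool) (t : R) :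
  coshR t * sigma (2 * spin s * t) = expR (spin s * t) / 2.
Proof.
have ha : expR t != 0 by rewrite gt_eqF // expR_gt0.
have hp := expR_gt0 t.
rewrite (_ : 2 * spin s * t = spin s * t + spin s * t); last by ring.
rewrite /coshR /sigma; case: s.
  rewrite (_ : spin true * t = t); last by rewrite /spin mul1r.
  rewrite !opprD !expRD !expRN.
  set a := expR t.
  by field; rewrite ha /= gt_eqF // addr_gt0 // mulr_gt0.
rewrite (_ : spin false * t = - t); last by rewrite /spin; ring.
rewrite opprD !opprK !expRD !expRN.
set a := expR t.
by field; rewrite ha /= gt_eqF // addr_gt0 // mulr_gt0.
Qed.

Lemma sum_ffun_prod (R : realType) (n : nat) (phi : 'I_n -> bool -> R) :
  \sum_(X : {ffun 'I_n -> bool}) \prod_(i < n) phi i (X i)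
  = \prod_(i < n) (phi i true + phi i false).
Proof.
rewrite -bigA_distr_bigA /=; apply: eq_bigr => i _; by rewrite big_bool.
Qed.

Theorem lemma5 (R : realType) (n m : nat) (J : 'M[R]_(n, m)) (h : 'I_n -> R)
  (g : 'I_m -> R) (I S : {set 'I_n}) (xI xS : {ffun 'I_n -> bool}) :
  [disjoint I & S] ->
  cond_exp_unif (fun X : {ffun 'I_n -> bool} => [forall i in S, X i == xS i])
    (fun X => (if [forall i in I, X i == xI i] then 1 else 0)
              * expR (fRBM J h g X))
  = \sum_(q : {ffun 'I_m -> bool})
      (expR (\sum_(j < m) g j * spin (q j))
       * (\prod_(i in S) expR (spin (xS i) * field_i J h q i))
       * (\prod_(i in ~: S) coshR (field_i J h q i))
       * (\prod_(i in I) sigma (2 * spin (xI i) * field_i J h q i))).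
Proof.
move=> Hdis.
rewrite /cond_exp_unif.
set C := fun (i : 'I_n) (b : bool) => ((i \in S) ==> (b == xS i)) && ((i \in I) ==> (b == xI i)).
set phi := fun (q : {ffun 'I_m -> bool}) (i : 'I_n) (b : bool) =>
  (if C i b then 1 else 0 : R) * expR (spin b * field_i J h q i).
set ind := fun (i : 'I_n) (b : bool) => (if (i \in S) ==> (b == xS i) then 1 else 0 : R).
have Hcard : (#|[pred x : {ffun 'I_n -> bool} | [forall i in S, x i == xS i]]|)%:R
   = \prod_(i < n) (ind i true + ind i false).
  rewrite -sum_ffun_prod.
  under [RHS]eq_bigr do rewrite /ind prod_ind.
  rewrite -big_mkcond /= sumr_const.
  rewrite -[RHS]mulr_natl mulr1; congr (_%:R).
have Hnum : \sum_(X : {ffun 'I_n -> bool} | [forall i in S, X i == xS i])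
   ((if [forall i in I, X i == xI i] then 1 else 0) * expR (fRBM J h g X))
   = \sum_(q : {ffun 'I_m -> bool}) expR (\sum_(j < m) g j * spin (q j)) *
       \prod_(i < n) (phi q i true + phi q i false).
  under [RHS]eq_bigr do rewrite -sum_ffun_prod mulr_sumr.
  rewrite exchange_big /= big_mkcond /=; apply: eq_bigr => X _.
  rewrite keyA mulr_sumr.
  have HC : [forall i, C i (X i)] =
      [forall i in S, X i == xS i] && [forall i in I, X i == xI i].
    apply/forallP/andP => [H|[/forallP H1 /forallP H2] i].
      by split; apply/forallP => i; case/andP: (H i).
    by rewrite /C H1 H2.
  under [RHS]eq_bigr => q _ do rewrite /phi big_split /= prod_ind HC.
  case: [forall i in S, X i == xS i]; case: [forall i in I, X i == xI i] => /=.
  - by apply: eq_bigr => q _; rewrite !mul1r.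
  - by rewrite !big1 // => q _; rewrite !mul0r ?mulr0.
  - by rewrite big1 // => q _; rewrite !mul0r ?mulr0.
  - by rewrite big1 // => q _; rewrite !mul0r ?mulr0.
rewrite Hnum Hcard mulr_suml; apply: eq_bigr => q _.
rewrite -mulrA -prodf_div -!mulrA; congr (_ * _).
rewrite [\prod_(i in S) _]big_mkcond [\prod_(i in ~: S) _]big_mkcond.
rewrite [\prod_(i in I) _]big_mkcond -!big_split /=; apply: eq_bigr => i _.
rewrite /phi /ind /C finset.in_setC.
case HiS: (i \in S) => /=.
  have HiI : (i \in I) = false by apply: (disjointFl Hdis HiS).
  rewrite HiI /= !mul1r.
  by case: (xS i) => /=; rewrite !(mul1r, mul0r, addr0, add0r, mulr1, divr1).
case HiI: (i \in I) => /=.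
  rewrite mul1r cosh_sigma.
  by case: (xI i) => /=; rewrite !(mul1r, mul0r, addr0, add0r, mulr1, divr1).
rewrite !mul1r mulr1 /coshR mulN1r.
by [].
Qed.
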